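(* Let $\kappa$ be a regular uncountable cardinal. Every proper pleasant ideal on $\kappa$ is subnormal, i.e. is contained in some proper normal ideal on $\kappa$.
   Context: An ideal on $\kappa$ is a family of subsets of $\kappa$ closed under subsets and finite unions, which is $<\kappa$-complete and contains all singletons (so it contains all subsets of size $<\kappa$). It is proper if $\kappa\notin I$. For $A\subseteq\kappa$ and $X_\alpha\subseteq\kappa$, $\bigtriangledown_{\alpha\in A}X_\alpha=\{\xi<\kappa:\exists\alpha<\xi\,(\alpha\in A\wedge \xi\in X_\alpha)\}$. $I$ is normal if $X_\alpha\in I$ for all $\alpha<\kappa$ implies $\bigtriangledown_{\alpha<\kappa}X_\alpha\in I$ (diagonal union with $A=\kappa$). $I$ is pleasant if whenever $A\in I$ and $X_\alpha\in I$ for all $\alpha$, then $\bigtriangledown_{\alpha\in A}X_\alpha\in I$. *)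

(* Defs.v *)
(* The cardinal kappa is represented by a type K carrying a strict well-order
   lt whose order type is kappa (an initial ordinal).  Subsets of kappa are
   predicates K -> Prop; an ideal is a predicate on such subsets. *)


Definition strict_wellorder {K : Type} (lt : K -> K -> Prop) : Prop :=
  (forall x, ~ lt x x) /\
  (forall x y z, lt x y -> lt y z -> lt x z) /\
  (forall x y, lt x y \/ x = y \/ lt y x) /\
  well_founded lt.

(* the proper initial segment below x, i.e. the ordinal x < kappa *)
Definition below {K : Type} (lt : K -> K -> Prop) (x : K) : Type :=
  { y : K | lt y x }.

(* the order type of (K, lt) is a cardinal: K does not inject into any
   proper initial segment *)
Definition is_cardinal_order {K : Type} (lt : K -> K -> Prop) : Prop :=
  forall x : K, ~ exists f : K -> below lt x,
      forall a b, f a = f b -> a = b.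

Definition is_regular {K : Type} (lt : K -> K -> Prop) : Prop :=
  forall (x : K) (f : below lt x -> K), exists b : K, forall i, lt (f i) b.

Definition is_uncountable (K : Type) : Prop :=
  ~ exists f : K -> nat, forall a b, f a = f b -> a = b.

Definition is_ideal {K : Type} (lt : K -> K -> Prop)
  (I : (K -> Prop) -> Prop) : Prop :=
  (forall A B : K -> Prop, I B -> (forall z, A z -> B z) -> I A) /\
  (forall A B : K -> Prop, I A -> I B -> I (fun z => A z \/ B z)) /\
  (forall (x : K) (F : below lt x -> K -> Prop),
      (forall i, I (F i)) -> I (fun z => exists i, F i z)) /\
  (forall a : K, I (fun z => z = a)).

Definition is_proper {K : Type} (I : (K -> Prop) -> Prop) : Prop :=
  ~ I (fun _ => True).

Definition diag_union {K : Type} (lt : K -> K -> Prop) (A : K -> Prop)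
  (X : K -> K -> Prop) : K -> Prop :=
  fun xi => exists alpha, lt alpha xi /\ A alpha /\ X alpha xi.

Definition is_normal {K : Type} (lt : K -> K -> Prop)
  (I : (K -> Prop) -> Prop) : Prop :=
  forall X : K -> K -> Prop, (forall a, I (X a)) ->
    I (diag_union lt (fun _ => True) X).

Definition is_pleasant {K : Type} (lt : K -> K -> Prop)
  (I : (K -> Prop) -> Prop) : Prop :=
  forall (A : K -> Prop) (X : K -> K -> Prop), I A -> (forall a, I (X a)) ->
    I (diag_union lt A X).

Definition is_subnormal {K : Type} (lt : K -> K -> Prop)
  (I : (K -> Prop) -> Prop) : Prop :=
  exists J : (K -> Prop) -> Prop,
    is_ideal lt J /\ is_proper J /\ is_normal lt J /\
    (forall A, I A -> J A).

(* Main.v *)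
Require Import Defs.
From Stdlib Require Import Classical ClassicalEpsilon IndefiniteDescription PeanoNat Lia.

Lemma wf_min {K : Type} (lt : K -> K -> Prop) (wf : well_founded lt) (P : K -> Prop) :
  (exists z, P z) -> exists z, P z /\ forall w, P w -> ~ lt w z.
Proof.
  intros [z Hz]. revert Hz. induction z as [z IH] using (well_founded_ind wf).
  intro Hz. destruct (classic (exists w, P w /\ lt w z)) as [[w [Pw ltw]]|N].
  - exact (IH w ltw Pw).
  - exists z. split; auto. intros w Pw l. apply N; eauto.
Qed.

Lemma K_inh (K : Type) : is_uncountable K -> exists k : K, True.
Proof.
  intro Hunc. apply NNPP; intro N. apply Hunc. exists (fun _ => 0).
  intros a b _. exfalso. apply N. exists a; auto.
Qed.

Lemma countable_union (K : Type) (lt : K -> K -> Prop)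
  (Hwo : strict_wellorder lt) (Hunc : is_uncountable K)
  (I : (K -> Prop) -> Prop) (HI : is_ideal lt I) (Hprop : is_proper I) :
  forall A : nat -> K -> Prop, (forall n, I (A n)) -> I (fun z => exists n, A n z).
Proof.
  intros A HA.
  destruct Hwo as [Hirr [Htr [Htri Hwf]]].
  destruct HI as [Hsub [Hun [Hcomp Hsing]]].
  assert (NM : forall m, exists y, lt m y).
  { intro m; apply NNPP; intro N. apply Hprop.
    pose proof (Hcomp m (fun i z => z = proj1_sig i) (fun i => Hsing (proj1_sig i))) as H1.
    pose proof (Hun _ _ H1 (Hsing m)) as H2.
    apply (Hsub _ _ H2). intros z _.
    destruct (Htri z m) as [l|[e|l]].
    - left. exists (exist _ z l). reflexivity.
    - right; exact e.
    - exfalso; apply N; eauto. }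
  destruct (wf_min lt Hwf (fun _ => True) (K_inh K Hunc)) as [m0 [_ Hm0]].
  assert (Hsucc : exists succ : K -> K, forall y, lt y (succ y) /\ forall w, lt y w -> ~ lt w (succ y)).
  { apply (functional_choice (fun y s => lt y s /\ forall w, lt y w -> ~ lt w s)).
    intro y. exact (wf_min lt Hwf (fun z => lt y z) (NM y)). }
  destruct Hsucc as [succ Hs].
  assert (He : exists e : nat -> K, e 0 = m0 /\ forall n, e (S n) = succ (e n)).
  { exists (fix e (n : nat) : K := match n with 0 => m0 | S n => succ (e n) end).
    split; reflexivity. }
  destruct He as [e [He0 HeS]].
  assert (Incr : forall m n, m < n -> lt (e m) (e n)).
  { intros m n; induction n; intros H; [lia|].
    rewrite HeS. destruct (Nat.eq_dec m n) as [->|ne]; [apply Hs|].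
    apply Htr with (e n); [apply IHn; lia | apply Hs]. }
  assert (Einj : forall m n, e m = e n -> m = n).
  { intros m n H. destruct (Nat.lt_trichotomy m n) as [l|[l|l]]; auto.
    - pose proof (Incr _ _ l) as X; rewrite H in X; destruct (Hirr _ X).
    - pose proof (Incr _ _ l) as X; rewrite H in X; destruct (Hirr _ X). }
  assert (Cov : forall n x, (x = e n \/ lt x (e n)) -> exists k, x = e k).
  { induction n; intros x [Hx|Hx]; eauto.
    - rewrite He0 in Hx. destruct (Hm0 x Logic.I).
      exact Hx.
    - rewrite HeS in Hx. destruct (Htri x (e n)) as [l|[l|l]].
      + apply IHn; auto.
      + eauto.
      + destruct (proj2 (Hs (e n)) x l Hx). }
  assert (Bd : exists x, forall n, lt (e n) x).
  { apply NNPP; intro N. apply Hunc.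
    assert (Hc : forall x, exists k, x = e k).
    { intro x. assert (Nx : ~ forall n, lt (e n) x) by (intro H; apply N; eauto).
      destruct (not_all_ex_not _ _ Nx) as [n Hn].
      apply (Cov n). destruct (Htri x (e n)) as [l|[l|l]]; auto.
      contradiction. }
    destruct (functional_choice _ Hc) as [h Hh].
    exists h. intros a b H. rewrite (Hh a), (Hh b), H. reflexivity. }
  destruct Bd as [x Hx].
  assert (Hg : exists g : below lt x -> nat,
             forall n (p : lt (e n) x), g (exist _ (e n) p) = n).
  { exists (fun i => match excluded_middle_informative (exists k, e k = proj1_sig i) with
                     | left H => proj1_sig (constructive_indefinite_description _ H)
                     | right _ => 0 end).
    intros n p. simpl.
    destruct (excluded_middle_informative _) as [H|H].
    - destruct (constructive_indefinite_description _ H) as [k Hk]; simpl.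
      apply Einj; exact Hk.
    - exfalso; apply H; eauto. }
  destruct Hg as [g Hg].
  pose proof (Hcomp x (fun i => A (g i)) (fun i => HA (g i))) as H1.
  apply (Hsub _ _ H1). intros z [n Hn].
  exists (exist _ (e n) (Hx n)). rewrite Hg. exact Hn.
Qed.

Theorem theorem2p2 (K : Type) (lt : K -> K -> Prop)
  (Hwo : strict_wellorder lt) (Hcard : is_cardinal_order lt)
  (Hreg : is_regular lt) (Hunc : is_uncountable K)
  (I : (K -> Prop) -> Prop)
  (HI : is_ideal lt I) (Hprop : is_proper I) (Hpl : is_pleasant lt I) :
  is_subnormal lt I.
Proof.
  pose proof (countable_union K lt Hwo Hunc I HI Hprop) as CU.
  destruct Hwo as [Hirr [Htr [Htri Hwf]]].
  destruct HI as [Hsub [Hun [Hcomp Hsing]]].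
  destruct (K_inh K Hunc) as [k0 _].
  assert (Hemp : I (fun _ => False)).
  { apply (Hsub _ _ (Hsing k0)). intros z []. }
  exists (fun Y => exists (B : K -> Prop) (X : K -> K -> Prop), I B /\ (forall a, I (X a)) /\
            (forall z, Y z -> B z \/ diag_union lt (fun _ => True) X z)).
  split; [|split; [|split]].
  - split; [|split; [|split]].
    + intros A B [B0 [X [HB [HX HY]]]] HAB. exists B0, X. split; auto.
    + intros A B [B1 [X1 [HB1 [HX1 HY1]]]] [B2 [X2 [HB2 [HX2 HY2]]]].
      exists (fun z => B1 z \/ B2 z), (fun a z => X1 a z \/ X2 a z).
      split; [auto|split; [auto|]].
      intros z [Hz|Hz].
      * destruct (HY1 z Hz) as [h|[al [l [_ h]]]]; [left; left; exact h|].
        right. exists al. split; auto.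
      * destruct (HY2 z Hz) as [h|[al [l [_ h]]]]; [left; right; exact h|].
        right. exists al. split; auto.
    + intros x F HF.
      destruct (functional_choice (fun i (p : (K -> Prop) * (K -> K -> Prop)) =>
                  I (fst p) /\ (forall a, I (snd p a)) /\
                  (forall z, F i z -> fst p z \/ diag_union lt (fun _ => True) (snd p) z)))
        as [c Hc].
      { intro i. destruct (HF i) as [B [X H]]. exists (B, X). exact H. }
      exists (fun z => exists i, fst (c i) z), (fun a z => exists i, snd (c i) a z).
      split; [apply Hcomp; intro i; apply (Hc i)|split].
      * intro a. apply Hcomp. intro i; apply (Hc i).
      * intros z [i Hz]. destruct (proj2 (proj2 (Hc i)) z Hz) as [h|[al [l [_ h]]]].
        -- left; eauto.
        -- right. exists al. split; [auto|split; eauto].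
    + intro a. exists (fun z => z = a), (fun _ _ => False).
      split; [auto|split; [auto|]]. auto.
  - intros [B [X [HB [HX Hall]]]].
    assert (HA : exists A : nat -> K -> Prop, A 0 = B /\
               forall n, A (S n) = (fun z => A n z \/ diag_union lt (A n) X z)).
    { exists (fix A (n : nat) : K -> Prop := match n with 0 => B
               | S n => fun z => A n z \/ diag_union lt (A n) X z end).
      split; reflexivity. }
    destruct HA as [A [HA0 HAS]].
    assert (IA : forall n, I (A n)).
    { induction n; [rewrite HA0; auto|rewrite HAS; apply Hun; auto]. }
    assert (Cv : forall z, exists n, A n z).
    { intro z. induction z as [z IH] using (well_founded_ind Hwf).
      destruct (Hall z Logic.I) as [h|[al [l [_ h]]]].
      - exists 0. rewrite HA0; exact h.
      - destruct (IH al l) as [n Hn]. exists (S n). rewrite HAS.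
        right. exists al. auto. }
    apply Hprop. apply (Hsub _ _ (CU A IA)). intros z _; apply Cv.
  - intros Y HY.
    destruct (functional_choice (fun a (p : (K -> Prop) * (K -> K -> Prop)) =>
                I (fst p) /\ (forall b, I (snd p b)) /\
                (forall z, Y a z -> fst p z \/ diag_union lt (fun _ => True) (snd p) z)))
      as [c Hc].
    { intro a. destruct (HY a) as [B [X H]]. exists (B, X). exact H. }
    exists (fun _ => False),
      (fun g z => fst (c g) z \/ snd (c g) g z \/
                  (exists i : below lt g, snd (c (proj1_sig i)) g z) \/
                  (exists i : below lt g, snd (c g) (proj1_sig i) z)).
    split; [exact Hemp|split].
    + intro g. repeat apply Hun.
      * apply (Hc g).
      * apply (Hc g).
      * apply Hcomp. intro i. apply (Hc (proj1_sig i)).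
      * apply Hcomp. intro i. apply (Hc g).
    + intros z [al [l [_ Hz]]]. right.
      destruct (proj2 (proj2 (Hc al)) z Hz) as [h|[be [l2 [_ h]]]].
      * exists al. split; [auto|split; auto].
      * destruct (Htri al be) as [m|[m|m]].
        -- exists be. split; [auto|split; [auto|]].
           right; right; left. exists (exist _ al m). exact h.
        -- subst be. exists al. split; [auto|split; [auto|]]. right; left; exact h.
        -- exists al. split; [auto|split; [auto|]].
           right; right; right. exists (exist _ be m). exact h.
  - intros A HA. exists A, (fun _ _ => False). split; [auto|split; [|auto]].
    intro; exact Hemp.
Qed.
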